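(* Let $\mathcal{C}$ be a skeletally small triangulated category with split idempotents and suspension $\Sigma$. If $A\xrightarrow{a}B\xrightarrow{b}C\xrightarrow{c}\Sigma A$ and $A'\xrightarrow{a'}B'\xrightarrow{b'}C'\xrightarrow{c'}\Sigma A'$ are triangles in $\mathcal{C}$ and $\operatorname{Im}\mathbb{Y}c\cong\operatorname{Im}\mathbb{Y}c'$ in $\operatorname{mod}\mathcal{C}$, then $[A]^{sp}-[B]^{sp}+[C]^{sp}=[A']^{sp}-[B']^{sp}+[C']^{sp}$ in $K_0^{sp}(\mathcal{C})$.
   Context: $\operatorname{mod}\mathcal{C}$ is the abelian category of finitely presented additive functors $\mathcal{C}^{op}\to\mathrm{Ab}$. $\mathbb{Y}\colon\mathcal{C}\to\operatorname{mod}\mathcal{C}$, $C\mapsto\mathcal{C}(-,C)$, is the Yoneda embedding, and $\operatorname{Im}\mathbb{Y}c$ is the image of $\mathcal{C}(-,c)\colon\mathcal{C}(-,C)\to\mathcal{C}(-,\Sigma A)$. $K_0^{sp}(\mathcal{C})$ is the split Grothendieck group: the free abelian group on isomorphism classes of objects modulo $[A\oplus B]=[A]+[B]$; $[C]^{sp}$ denotes the class of $C$. *)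

(* Defs.v *)
From HB Require Import structures.
From mathcomp Require Import all_boot all_algebra.
Set Implicit Arguments. Unset Strict Implicit. Unset Printing Implicit Defensive.
Import GRing.Theory.
Local Open Scope ring_scope.

Record TriData := {
  Ob : Type;
  Mor : Ob -> Ob -> zmodType;
  idm : forall X : Ob, Mor X X;
  comp : forall X Y Z : Ob, Mor Y Z -> Mor X Y -> Mor X Z;
  Sig : Ob -> Ob;
  sigm : forall X Y : Ob, Mor X Y -> Mor (Sig X) (Sig Y);
  dist : forall A B C : Ob, Mor A B -> Mor B C -> Mor C (Sig A) -> Prop
}.
Arguments idm {t} X.
Arguments comp {t X Y Z} g f.
Arguments Sig {t} X.
Arguments sigm {t X Y} f.
Arguments dist {t A B C} a b c.

Section TriAx.
Variable T : TriData.
Local Notation Ob := (Ob T).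
Local Notation Mor := (@Mor T).

Definition is_iso (X Y : Ob) (f : Mor X Y) : Prop :=
  exists g : Mor Y X, comp g f = idm X /\ comp f g = idm Y.

Definition iso_obj (X Y : Ob) : Prop := exists f : Mor X Y, is_iso f.

Definition preadditive_ax : Prop :=
  [/\ (forall (W X Y Z : Ob) (h : Mor Y Z) (g : Mor X Y) (f : Mor W X),
         comp h (comp g f) = comp (comp h g) f),
      (forall (X Y : Ob) (f : Mor X Y), comp (idm Y) f = f),
      (forall (X Y : Ob) (f : Mor X Y), comp f (idm X) = f),
      (forall (X Y Z : Ob) (g g' : Mor Y Z) (f : Mor X Y),
         comp (g + g') f = comp g f + comp g' f) &
      (forall (X Y Z : Ob) (g : Mor Y Z) (f f' : Mor X Y),
         comp g (f + f') = comp g f + comp g f')].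

Definition is_zero_obj (Z : Ob) : Prop :=
  (forall (X : Ob) (f : Mor Z X), f = 0) /\ (forall (X : Ob) (f : Mor X Z), f = 0).

Definition is_biproduct (A B P : Ob) (i1 : Mor A P) (i2 : Mor B P)
  (p1 : Mor P A) (p2 : Mor P B) : Prop :=
  [/\ comp p1 i1 = idm A, comp p2 i2 = idm B, comp p1 i2 = 0, comp p2 i1 = 0 &
      comp i1 p1 + comp i2 p2 = idm P].

Definition biprod_of (A B P : Ob) : Prop :=
  exists i1 i2 p1 p2, @is_biproduct A B P i1 i2 p1 p2.

Definition additive_ax : Prop :=
  [/\ preadditive_ax, (exists Z : Ob, is_zero_obj Z) &
      (forall A B : Ob, exists P : Ob, biprod_of A B P)].

Definition suspension_ax : Prop :=
  [/\ (forall (X Y : Ob) (f g : Mor X Y), sigm (f + g) = sigm f + sigm g),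
      (forall X : Ob, sigm (idm X) = idm (Sig X)),
      (forall (X Y Z : Ob) (g : Mor Y Z) (f : Mor X Y),
         sigm (comp g f) = comp (sigm g) (sigm f)),
      (forall X Y : Ob, bijective (@sigm T X Y)) &
      (forall Y : Ob, exists X : Ob, iso_obj (Sig X) Y)].

Definition TR1 : Prop :=
  [/\ (forall (A B C A' B' C' : Ob) (a : Mor A B) (b : Mor B C) (c : Mor C (Sig A))
          (a' : Mor A' B') (b' : Mor B' C') (c' : Mor C' (Sig A'))
          (u : Mor A A') (v : Mor B B') (w : Mor C C'),
         dist a b c -> is_iso u -> is_iso v -> is_iso w ->
         comp a' u = comp v a -> comp b' v = comp w b -> comp c' w = comp (sigm u) c ->
         dist a' b' c'),
      (forall X Z : Ob, is_zero_obj Z ->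
         dist (idm X) (0 : Mor X Z) (0 : Mor Z (Sig X))) &
      (forall (A B : Ob) (a : Mor A B),
         exists (C : Ob) (b : Mor B C) (c : Mor C (Sig A)), dist a b c)].

Definition TR2 : Prop :=
  forall (A B C : Ob) (a : Mor A B) (b : Mor B C) (c : Mor C (Sig A)),
    dist a b c <-> dist b c (- sigm a).

Definition TR3 : Prop :=
  forall (A B C A' B' C' : Ob) (a : Mor A B) (b : Mor B C) (c : Mor C (Sig A))
         (a' : Mor A' B') (b' : Mor B' C') (c' : Mor C' (Sig A'))
         (u : Mor A A') (v : Mor B B'),
    dist a b c -> dist a' b' c' -> comp a' u = comp v a ->
    exists w : Mor C C', comp b' v = comp w b /\ comp c' w = comp (sigm u) c.

Definition TR4 : Prop :=
  forall (X Y Z Z' X' Y' : Ob) (f : Mor X Y) (g : Mor Y Z)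
         (f1 : Mor Y Z') (f2 : Mor Z' (Sig X))
         (g1 : Mor Z X') (g2 : Mor X' (Sig Y))
         (h1 : Mor Z Y') (h2 : Mor Y' (Sig X)),
    dist f f1 f2 -> dist g g1 g2 -> dist (comp g f) h1 h2 ->
    exists (u : Mor Z' Y') (v : Mor Y' X'),
      [/\ dist u v (comp (sigm f1) g2),
          comp u f1 = comp h1 g, comp h2 u = f2,
          comp v h1 = g1 & comp g2 v = comp (sigm f) h2].

Definition is_triangulated : Prop :=
  [/\ additive_ax, suspension_ax, TR1, TR2 & (TR3 /\ TR4)].

Definition idempotents_split : Prop :=
  forall (X : Ob) (e : Mor X X), comp e e = e ->
    exists (Y : Ob) (r : Mor X Y) (s : Mor Y X), comp s r = e /\ comp r s = idm Y.

(* Im Y c, for c : C -> Sig A, is the subfunctor of C(-, Sig A) whose value at X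
   is the subgroup of maps X -> Sig A factoring through c. *)
Definition ImY (C D : Ob) (c : Mor C D) (X : Ob) (f : Mor X D) : Prop :=
  exists g : Mor X C, f = comp c g.

(* An isomorphism Im Y c ~= Im Y c' in mod C (a full subcategory of the
   functor category), i.e. a natural isomorphism of additive functors:
   componentwise additive bijections, natural in X. *)
Definition ImY_iso (C D C' D' : Ob) (c : Mor C D) (c' : Mor C' D') : Prop :=
  exists phi : forall X : Ob, Mor X D -> Mor X D',
    [/\ (forall (X : Ob) (f : Mor X D), ImY c f -> ImY c' (phi X f)),
        (forall (X : Ob) (f g : Mor X D), ImY c f -> ImY c g ->
           phi X (f + g) = phi X f + phi X g),
        (forall (X : Ob) (f g : Mor X D), ImY c f -> ImY c g ->
           phi X f = phi X g -> f = g),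
        (forall (X : Ob) (f' : Mor X D'), ImY c' f' ->
           exists2 f : Mor X D, ImY c f & phi X f = f') &
        (forall (X W : Ob) (h : Mor X W) (f : Mor W D), ImY c f ->
           phi X (comp f h) = comp (phi W f) h)].

(* Split Grothendieck group, via its universal property: a map from objects
   to an abelian group factors through K_0^sp(C) iff it is constant on
   isomorphism classes and sends biproducts to sums. Two formal combinations
   are equal in K_0^sp iff they agree under every such map. *)
Definition sp_additive (G : zmodType) (F : Ob -> G) : Prop :=
  (forall X Y : Ob, iso_obj X Y -> F X = F Y) /\
  (forall A B P : Ob, biprod_of A B P -> F P = F A + F B).

Definition K0sp_eq (A B C A' B' C' : Ob) : Prop :=
  forall (G : zmodType) (F : Ob -> G), sp_additive F ->
    F A - F B + F C = F A' - F B' + F C'.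

End TriAx.

(* Main.v *)
Require Import Defs.
From HB Require Import structures.
From mathcomp Require Import all_boot all_algebra.
Set Implicit Arguments. Unset Strict Implicit. Unset Printing Implicit Defensive.
Import GRing.Theory.
Import Defs.
Local Open Scope ring_scope.



Lemma compA (T : TriData) (hT : is_triangulated T) (W X Y Z : Ob T)
  (h : Mor Y Z) (g : Mor X Y) (f : Mor W X) : comp h (comp g f) = comp (comp h g) f.
Proof. by case: hT => [[[]]]. Qed.
Lemma comp1l (T : TriData) (hT : is_triangulated T) (X Y : Ob T) (f : Mor X Y) :
  comp (idm Y) f = f.
Proof. by case: hT => [[[]]]. Qed.
Lemma comp1r (T : TriData) (hT : is_triangulated T) (X Y : Ob T) (f : Mor X Y) :
  comp f (idm X) = f.
Proof. by case: hT => [[[]]]. Qed.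
Lemma compDl (T : TriData) (hT : is_triangulated T) (X Y Z : Ob T) (g g' : Mor Y Z) (f : Mor X Y) :
  comp (g + g') f = comp g f + comp g' f.
Proof. by case: hT => [[[]]]. Qed.
Lemma compDr (T : TriData) (hT : is_triangulated T) (X Y Z : Ob T) (g : Mor Y Z) (f f' : Mor X Y) :
  comp g (f + f') = comp g f + comp g f'.
Proof. by case: hT => [[[]]]. Qed.
Lemma comp0l (T : TriData) (hT : is_triangulated T) (X Y Z : Ob T) (f : Mor X Y) :
  comp (0 : Mor Y Z) f = 0.
Proof.
have h := compDl hT (0 : Mor Y Z) 0 f; rewrite addr0 in h.
by apply: (@addrI _ (comp (0 : Mor Y Z) f)); rewrite addr0 -{1}h.
Qed.
Lemma comp0r (T : TriData) (hT : is_triangulated T) (X Y Z : Ob T) (g : Mor Y Z) :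
  comp g (0 : Mor X Y) = 0.
Proof.
have h := compDr hT g (0 : Mor X Y) 0; rewrite addr0 in h.
by apply: (@addrI _ (comp g (0 : Mor X Y))); rewrite addr0 -{1}h.
Qed.
Lemma compNl (T : TriData) (hT : is_triangulated T) (X Y Z : Ob T) (g : Mor Y Z) (f : Mor X Y) :
  comp (- g) f = - comp g f.
Proof. by apply/eqP; rewrite -addr_eq0 -compDl // addNr comp0l. Qed.
Lemma compNr (T : TriData) (hT : is_triangulated T) (X Y Z : Ob T) (g : Mor Y Z) (f : Mor X Y) :
  comp g (- f) = - comp g f.
Proof. by apply/eqP; rewrite -addr_eq0 -compDr // addNr comp0r. Qed.
Lemma compBl (T : TriData) (hT : is_triangulated T) (X Y Z : Ob T) (g g' : Mor Y Z) (f : Mor X Y) :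
  comp (g - g') f = comp g f - comp g' f.
Proof. by rewrite compDl // compNl. Qed.
Lemma compBr (T : TriData) (hT : is_triangulated T) (X Y Z : Ob T) (g : Mor Y Z) (f f' : Mor X Y) :
  comp g (f - f') = comp g f - comp g f'.
Proof. by rewrite compDr // compNr. Qed.


Lemma sigmD (T : TriData) (hT : is_triangulated T) (X Y : Ob T) (f g : Mor X Y) :
  sigm (f + g) = sigm f + sigm g.
Proof. by case: hT => _ [] . Qed.
Lemma sigm1 (T : TriData) (hT : is_triangulated T) (X : Ob T) :
  sigm (idm X) = idm (Sig X).
Proof. by case: hT => _ []. Qed.
Lemma sigmM (T : TriData) (hT : is_triangulated T) (X Y Z : Ob T) (g : Mor Y Z) (f : Mor X Y) :
  sigm (comp g f) = comp (sigm g) (sigm f).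
Proof. by case: hT => _ []. Qed.
Lemma sigm_bij (T : TriData) (hT : is_triangulated T) (X Y : Ob T) :
  bijective (@sigm T X Y).
Proof. by case: hT => _ []. Qed.
Lemma sigm_inj (T : TriData) (hT : is_triangulated T) (X Y : Ob T) (f g : Mor X Y) :
  sigm f = sigm g -> f = g.
Proof. by case: (sigm_bij hT X Y) => h K _; move=> /(congr1 h); rewrite !K. Qed.
Lemma sigm_surj (T : TriData) (hT : is_triangulated T) (X Y : Ob T) (g : Mor (Sig X) (Sig Y)) :
  exists f : Mor X Y, g = sigm f.
Proof. case: (sigm_bij hT X Y) => h _ K. by exists (h g); rewrite K. Qed.
Lemma sigm0 (T : TriData) (hT : is_triangulated T) (X Y : Ob T) :
  sigm (0 : Mor X Y) = 0.
Proof.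
have h := sigmD hT (0 : Mor X Y) 0; rewrite addr0 in h.
by apply: (addrI (sigm (0 : Mor X Y))); rewrite addr0 -{1}h.
Qed.
Lemma sigmN (T : TriData) (hT : is_triangulated T) (X Y : Ob T) (f : Mor X Y) :
  sigm (- f) = - sigm f.
Proof. by apply/eqP; rewrite -addr_eq0 -sigmD // addNr sigm0. Qed.

Lemma zero_exists (T : TriData) (hT : is_triangulated T) : exists Z : Ob T, is_zero_obj Z.
Proof. by case: hT => [[]]. Qed.
Lemma biprod_exists (T : TriData) (hT : is_triangulated T) (A B : Ob T) :
  exists P, biprod_of A B P.
Proof. by case: hT => [[]]. Qed.
Lemma zero_idm (T : TriData) (Z : Ob T) : is_zero_obj Z -> idm Z = 0.
Proof. by rewrite /is_zero_obj => -[h _]; apply: h. Qed.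
Lemma sig_zero (T : TriData) (hT : is_triangulated T) (Z : Ob T) :
  is_zero_obj Z -> is_zero_obj (Sig Z).
Proof.
move=> hZ; have e : idm (Sig Z) = 0 by rewrite -sigm1 // zero_idm // sigm0.
split=> X f.
  by rewrite -(comp1r hT f) e comp0r.
by rewrite -(comp1l hT f) e comp0l.
Qed.

Lemma TR1a (T : TriData) (hT : is_triangulated T) (A B C A' B' C' : Ob T)
  (a : Mor A B) (b : Mor B C) (c : Mor C (Sig A))
  (a' : Mor A' B') (b' : Mor B' C') (c' : Mor C' (Sig A'))
  (u : Mor A A') (v : Mor B B') (w : Mor C C') :
  dist a b c -> is_iso u -> is_iso v -> is_iso w ->
  comp a' u = comp v a -> comp b' v = comp w b -> comp c' w = comp (sigm u) c ->
  dist a' b' c'.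
Proof. by case: hT => _ _ [h _ _] _ _; apply: h. Qed.
Lemma TR1b (T : TriData) (hT : is_triangulated T) (X Z : Ob T) :
  is_zero_obj Z -> dist (idm X) (0 : Mor X Z) (0 : Mor Z (Sig X)).
Proof. by case: hT => _ _ [_ h _] _ _; apply: h. Qed.
Lemma TR1c (T : TriData) (hT : is_triangulated T) (A B : Ob T) (a : Mor A B) :
  exists (C : Ob T) (b : Mor B C) (c : Mor C (Sig A)), dist a b c.
Proof. by case: hT => _ _ [_ _ h] _ _; apply: h. Qed.
Lemma rot (T : TriData) (hT : is_triangulated T) (A B C : Ob T)
  (a : Mor A B) (b : Mor B C) (c : Mor C (Sig A)) :
  dist a b c -> dist b c (- sigm a).
Proof. case: hT => _ _ _ h _; exact: (proj1 (h _ _ _ a b c)). Qed.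
Lemma unrot (T : TriData) (hT : is_triangulated T) (A B C : Ob T)
  (a : Mor A B) (b : Mor B C) (c : Mor C (Sig A)) :
  dist b c (- sigm a) -> dist a b c.
Proof. case: hT => _ _ _ h _; exact: (proj2 (h _ _ _ a b c)). Qed.
Lemma TR3' (T : TriData) (hT : is_triangulated T) (A B C A' B' C' : Ob T)
  (a : Mor A B) (b : Mor B C) (c : Mor C (Sig A))
  (a' : Mor A' B') (b' : Mor B' C') (c' : Mor C' (Sig A'))
  (u : Mor A A') (v : Mor B B') :
  dist a b c -> dist a' b' c' -> comp a' u = comp v a ->
  exists w : Mor C C', comp b' v = comp w b /\ comp c' w = comp (sigm u) c.
Proof. by case: hT => _ _ _ _ [h _]; apply: h. Qed.



Lemma triv2 (T : TriData) (hT : is_triangulated T) (Z W : Ob T) :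
  is_zero_obj Z -> dist (0 : Mor Z W) (idm W) (0 : Mor W (Sig Z)).
Proof.
move=> hZ; apply: (unrot hT); rewrite sigm0 // oppr0.
exact: (TR1b hT W (sig_zero hT hZ)).
Qed.

Lemma consec (T : TriData) (hT : is_triangulated T) (X Y Z : Ob T)
  (f : Mor X Y) (g : Mor Y Z) (h : Mor Z (Sig X)) :
  dist f g h -> comp g f = 0.
Proof.
move=> hd; have [Z0 hZ] := zero_exists hT.
have [w [e _]] := TR3' hT (u := idm X) (v := f) (TR1b hT X hZ) hd erefl.
by rewrite e comp0r.
Qed.

Lemma exact_right (T : TriData) (hT : is_triangulated T) (X Y Z : Ob T)
  (f : Mor X Y) (g : Mor Y Z) (h : Mor Z (Sig X)) (W : Ob T) (k : Mor W Y) :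
  dist f g h -> comp g k = 0 -> exists k' : Mor W X, k = comp f k'.
Proof.
move=> hd gk; have [Z0 hZ] := zero_exists hT.
have t0 := rot hT (TR1b hT W hZ).
have hc : comp g k = comp (0 : Mor Z0 Z) (0 : Mor W Z0) by rewrite gk comp0r.
have [w [_ e]] := TR3' hT t0 (rot hT hd) hc.
rewrite compNl // compNr // sigm1 // comp1r // in e.
have {}e := oppr_inj e.
have [k' ek] := sigm_surj hT w; rewrite ek in e.
by exists k'; apply: (sigm_inj hT); rewrite sigmM.
Qed.

Lemma exact_left (T : TriData) (hT : is_triangulated T) (X Y Z : Ob T)
  (f : Mor X Y) (g : Mor Y Z) (h : Mor Z (Sig X)) (W : Ob T) (k : Mor Y W) :
  dist f g h -> comp k f = 0 -> exists k' : Mor Z W, k = comp k' g.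
Proof.
move=> hd kf; have [Z0 hZ] := zero_exists hT.
have hc : comp (0 : Mor Z0 W) (0 : Mor X Z0) = comp k f by rewrite kf comp0r.
have [w [e _]] := TR3' hT hd (triv2 hT W hZ) hc.
by exists w; rewrite -e comp1l.
Qed.



Lemma compE2 (T : TriData) (hT : is_triangulated T) (V W X Y : Ob T)
  (a : Mor X Y) (b : Mor W X) (c : Mor W Y) (q : Mor V W) :
  comp a b = c -> comp a (comp b q) = comp c q.
Proof. by move=> <-; rewrite compA. Qed.

Lemma iso_sig (T : TriData) (hT : is_triangulated T) (X Y : Ob T) (x : Mor X Y) :
  is_iso x -> is_iso (sigm x).
Proof.
rewrite /is_iso; case=> xi [e1 e2]; exists (sigm xi); split; by rewrite -sigmM // ?e1 ?e2 sigm1.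
Qed.

Lemma iso_comp (T : TriData) (hT : is_triangulated T) (X Y Z : Ob T) (x : Mor X Y) (y : Mor Y Z) :
  is_iso x -> is_iso y -> is_iso (comp y x).
Proof.
rewrite /is_iso; case=> xi [e1 e2] [yi [f1 f2]]; exists (comp xi yi); split.
  by rewrite -compA // (compE2 hT _ f1) comp1l.
by rewrite -compA // (compE2 hT _ e2) comp1l.
Qed.

Lemma iso_mono (T : TriData) (hT : is_triangulated T) (X Y W : Ob T) (x : Mor X Y) (k k' : Mor W X) :
  is_iso x -> comp x k = comp x k' -> k = k'.
Proof.
rewrite /is_iso; case=> xi [e1 e2] e.
by rewrite -(comp1l hT k) -(comp1l hT k') -e1 -!compA // e.
Qed.

Lemma iso_mono0 (T : TriData) (hT : is_triangulated T) (X Y W : Ob T) (x : Mor X Y) (k : Mor W X) :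
  is_iso x -> comp x k = 0 -> k = 0.
Proof. by move=> hx e; apply: (iso_mono hT hx); rewrite e comp0r. Qed.

Lemma five (T : TriData) (hT : is_triangulated T) (X Y Z X' Y' Z' : Ob T)
  (f : Mor X Y) (g : Mor Y Z) (h : Mor Z (Sig X))
  (f' : Mor X' Y') (g' : Mor Y' Z') (h' : Mor Z' (Sig X'))
  (x : Mor X X') (y : Mor Y Y') (z : Mor Z Z') :
  (forall W (k : Mor W Z), comp h k = 0 -> exists m : Mor W Y, k = comp g m) ->
  (forall W (s : Mor W (Sig X)), comp (sigm f) s = 0 -> exists k : Mor W Z, s = comp h k) ->
  comp g f = 0 ->
  comp (sigm f') h' = 0 ->
  (forall W (k : Mor W Z'), comp h' k = 0 -> exists m : Mor W Y', k = comp g' m) ->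
  (forall W (m : Mor W Y'), comp g' m = 0 -> exists n : Mor W X', m = comp f' n) ->
  is_iso x -> is_iso y ->
  comp f' x = comp y f -> comp g' y = comp z g -> comp h' z = comp (sigm x) h ->
  is_iso z.
Proof.
move=> S1 S2 S3 T1 T2 T3 hx hy ex ey ez.
have hx' := hx; rewrite /is_iso in hx'; case: hx' => xi [xe1 xe2].
have hy' := hy; rewrite /is_iso in hy'; case: hy' => yi [ye1 ye2].
have surj : forall W (t : Mor W Z'), exists k : Mor W Z, t = comp z k.
  move=> W t.
  pose s := comp (sigm xi) (comp h' t).
  have hs : comp (sigm f) s = 0.
    apply: (iso_mono0 hT (iso_sig hT hy)).
    have sx : comp (sigm x) (sigm xi) = idm _ by rewrite -sigmM // xe2 sigm1.
    rewrite /s compA // -sigmM // -ex sigmM // -compA // (compE2 hT _ sx) comp1l //.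
    by rewrite compA // T1 comp0l.
  have [k ek] := S2 _ _ hs.
  have : comp h' (t - comp z k) = 0.
    rewrite compBr // compA // ez -compA // -ek /s compA // -sigmM // xe2 sigm1 // comp1l //.
    by rewrite subrr.
  case/T2=> m em.
  exists (k + comp g (comp yi m)).
  rewrite compDr // compA // -ey -compA // (compE2 hT _ ye2) comp1l // -em.
  by rewrite addrC subrK.
have inj : forall W (k : Mor W Z), comp z k = 0 -> k = 0.
  move=> W k ek.
  have : comp h k = 0.
    apply: (iso_mono0 hT (iso_sig hT hx)).
    by rewrite compA // -ez -compA // ek comp0r.
  case/S1=> m em.
  have : comp g' (comp y m) = 0 by rewrite compA // ey -compA // -em.
  case/T3=> n en.
  have : m = comp f (comp xi n).
    apply: (iso_mono hT hy).
    by rewrite en compA // -ex -compA // (compE2 hT _ xe2) comp1l.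
  by move=> em'; rewrite em em' compA // S3 comp0l.
have [s es] := surj _ (idm Z').
rewrite /is_iso; exists s; split=> //.
apply/eqP; rewrite -subr_eq0; apply/eqP; apply: inj.
by rewrite compBr // compA // -es comp1l // comp1r // subrr.
Qed.

Lemma dist_props (T : TriData) (hT : is_triangulated T) (X Y Z : Ob T)
  (f : Mor X Y) (g : Mor Y Z) (h : Mor Z (Sig X)) : dist f g h ->
  [/\ (forall W (k : Mor W Z), comp h k = 0 -> exists m : Mor W Y, k = comp g m),
      (forall W (s : Mor W (Sig X)), comp (sigm f) s = 0 -> exists k : Mor W Z, s = comp h k),
      comp g f = 0,
      comp (sigm f) h = 0 &
      (forall W (m : Mor W Y), comp g m = 0 -> exists n : Mor W X, m = comp f n)].
Proof.
move=> hd; have r1 := rot hT hd; have r2 := rot hT r1.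
split.
- by move=> W k; apply: exact_right r1.
- by move=> W s e; apply: (exact_right hT r2); rewrite compNl // e oppr0.
- exact: consec hd.
- by apply: oppr_inj; rewrite -compNl // (consec hT r2) oppr0.
- by move=> W m; apply: exact_right hd.
Qed.

Lemma dist_five (T : TriData) (hT : is_triangulated T) (X Y Z X' Y' Z' : Ob T)
  (f : Mor X Y) (g : Mor Y Z) (h : Mor Z (Sig X))
  (f' : Mor X' Y') (g' : Mor Y' Z') (h' : Mor Z' (Sig X'))
  (x : Mor X X') (y : Mor Y Y') (z : Mor Z Z') :
  dist f g h -> dist f' g' h' -> is_iso x -> is_iso y ->
  comp f' x = comp y f -> comp g' y = comp z g -> comp h' z = comp (sigm x) h ->
  is_iso z.
Proof.
move=> /(dist_props hT) [S1 S2 S3 _ _] /(dist_props hT) [T2 _ _ T1 T3].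
exact: five.
Qed.

Lemma sig_reflect (T : TriData) (hT : is_triangulated T) (X Y : Ob T) (z : Mor (Sig X) (Sig Y)) :
  is_iso z -> iso_obj X Y.
Proof.
rewrite /is_iso => -[zi [e1 e2]].
have [v ev] := sigm_surj hT z; have [vi evi] := sigm_surj hT zi.
exists v; exists vi; split; apply: (sigm_inj hT); rewrite sigmM // sigm1 // -ev -evi //.
Qed.




Lemma bp_11 (T : TriData) (hT : is_triangulated T) (A B P : Ob T) i1 i2 p1 p2
  (bp : @is_biproduct T A B P i1 i2 p1 p2) (W : Ob T) (Q : Mor W A) : comp p1 (comp i1 Q) = Q.
Proof. by case: bp => e _ _ _ _; rewrite (compA hT) e comp1l. Qed.
Lemma bp_22 (T : TriData) (hT : is_triangulated T) (A B P : Ob T) i1 i2 p1 p2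
  (bp : @is_biproduct T A B P i1 i2 p1 p2) (W : Ob T) (Q : Mor W B) : comp p2 (comp i2 Q) = Q.
Proof. by case: bp => _ e _ _ _; rewrite (compA hT) e comp1l. Qed.
Lemma bp_12 (T : TriData) (hT : is_triangulated T) (A B P : Ob T) i1 i2 p1 p2
  (bp : @is_biproduct T A B P i1 i2 p1 p2) (W : Ob T) (Q : Mor W B) : comp p1 (comp i2 Q) = 0.
Proof. by case: bp => _ _ e _ _; rewrite (compA hT) e comp0l. Qed.
Lemma bp_21 (T : TriData) (hT : is_triangulated T) (A B P : Ob T) i1 i2 p1 p2
  (bp : @is_biproduct T A B P i1 i2 p1 p2) (W : Ob T) (Q : Mor W A) : comp p2 (comp i1 Q) = 0.
Proof. by case: bp => _ _ _ e _; rewrite (compA hT) e comp0l. Qed.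
Lemma bp_11' (T : TriData) (A B P : Ob T) i1 i2 p1 p2
  (bp : @is_biproduct T A B P i1 i2 p1 p2) : comp p1 i1 = idm A.
Proof. by case: bp. Qed.
Lemma bp_22' (T : TriData) (A B P : Ob T) i1 i2 p1 p2
  (bp : @is_biproduct T A B P i1 i2 p1 p2) : comp p2 i2 = idm B.
Proof. by case: bp. Qed.
Lemma bp_12' (T : TriData) (A B P : Ob T) i1 i2 p1 p2
  (bp : @is_biproduct T A B P i1 i2 p1 p2) : comp p1 i2 = 0.
Proof. by case: bp. Qed.
Lemma bp_21' (T : TriData) (A B P : Ob T) i1 i2 p1 p2
  (bp : @is_biproduct T A B P i1 i2 p1 p2) : comp p2 i1 = 0.
Proof. by case: bp. Qed.
Lemma bp_sum (T : TriData) (hT : is_triangulated T) (A B P : Ob T) i1 i2 p1 p2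
  (bp : @is_biproduct T A B P i1 i2 p1 p2) (W : Ob T) (Q : Mor W P) :
  comp i1 (comp p1 Q) + comp i2 (comp p2 Q) = Q.
Proof. by case: bp => _ _ _ _ e; rewrite !(compA hT) -(compDl hT) e comp1l. Qed.
Lemma bp_id (T : TriData) (A B P : Ob T) i1 i2 p1 p2
  (bp : @is_biproduct T A B P i1 i2 p1 p2) : comp i1 p1 + comp i2 p2 = idm P.
Proof. by case: bp. Qed.

Lemma bp_sig (T : TriData) (hT : is_triangulated T) (A B P : Ob T) i1 i2 p1 p2 :
  @is_biproduct T A B P i1 i2 p1 p2 ->
  is_biproduct (sigm i1) (sigm i2) (sigm p1) (sigm p2).
Proof.
case=> e1 e2 e3 e4 e5; split; rewrite -?(sigmM hT) ?e1 ?e2 ?e3 ?e4 ?(sigm1 hT) ?(sigm0 hT) //.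
by rewrite -(sigmD hT) e5 sigm1.
Qed.

Ltac nf hT := rewrite ?(compDl hT) ?(compDr hT) -?(compA hT) ?(comp0l hT) ?(comp0r hT)
  ?(compNl hT) ?(compNr hT) ?(comp1l hT) ?(comp1r hT) ?(sigmD hT) ?(sigmM hT) ?(sigm0 hT) ?(sigm1 hT)
  ?addr0 ?add0r.

Ltac bps hT bp := rewrite ?(bp_11 hT bp) ?(bp_22 hT bp) ?(bp_12 hT bp) ?(bp_21 hT bp)
  ?(bp_11' bp) ?(bp_22' bp) ?(bp_12' bp) ?(bp_21' bp).

Lemma iso_id (T : TriData) (hT : is_triangulated T) (X : Ob T) : is_iso (idm X).
Proof. by exists (idm X); rewrite comp1l. Qed.

Lemma dsum (T : TriData) (hT : is_triangulated T) (A1 B1 C1 A2 B2 C2 PA PB PC : Ob T)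
  (a1 : Mor A1 B1) (b1 : Mor B1 C1) (c1 : Mor C1 (Sig A1))
  (a2 : Mor A2 B2) (b2 : Mor B2 C2) (c2 : Mor C2 (Sig A2))
  iA1 iA2 pA1 pA2 iB1 iB2 pB1 pB2 iC1 iC2 pC1 pC2 :
  dist a1 b1 c1 -> dist a2 b2 c2 ->
  @is_biproduct T A1 A2 PA iA1 iA2 pA1 pA2 ->
  @is_biproduct T B1 B2 PB iB1 iB2 pB1 pB2 ->
  @is_biproduct T C1 C2 PC iC1 iC2 pC1 pC2 ->
  dist (comp iB1 (comp a1 pA1) + comp iB2 (comp a2 pA2))
       (comp iC1 (comp b1 pB1) + comp iC2 (comp b2 pB2))
       (comp (sigm iA1) (comp c1 pC1) + comp (sigm iA2) (comp c2 pC2)).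
Proof.
move=> d1 d2 bA bB bC.
have bSA := bp_sig hT bA.
have [C0 [b0 [c0 d0]]] := TR1c hT (comp iB1 (comp a1 pA1) + comp iB2 (comp a2 pA2)).
have e1 : comp (comp iB1 (comp a1 pA1) + comp iB2 (comp a2 pA2)) iA1 = comp iB1 a1.
  by do 2 (nf hT; bps hT bA).
have e2 : comp (comp iB1 (comp a1 pA1) + comp iB2 (comp a2 pA2)) iA2 = comp iB2 a2.
  by do 2 (nf hT; bps hT bA).
have [w1 [f1 g1]] := TR3' hT d1 d0 e1.
have [w2 [f2 g2]] := TR3' hT d2 d0 e2.
pose W := comp w1 pC1 + comp w2 pC2.
have hb : comp b0 (idm PB) = comp W (comp iC1 (comp b1 pB1) + comp iC2 (comp b2 pB2)).
  rewrite /W; do 2 (nf hT; bps hT bC).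
  rewrite (compE2 hT _ (esym f1)) (compE2 hT _ (esym f2)) -!(compA hT) -(compDr hT).
  by rewrite (bp_id bB) (comp1r hT).
have hc : comp c0 W = comp (sigm (idm PA))
    (comp (sigm iA1) (comp c1 pC1) + comp (sigm iA2) (comp c2 pC2)).
  rewrite /W (sigm1 hT) (comp1l hT) (compDr hT) (compE2 hT _ g1) (compE2 hT _ g2).
  by rewrite -!(compA hT).
have [dS1 dS2 dS3 _ _] := dist_props hT d1.
have [eS1 eS2 eS3 _ _] := dist_props hT d2.
have [_ _ _ T1 T3] := dist_props hT d0.
have [T2 _ _ _ _] := dist_props hT d0.
have hW : is_iso W.
  have ha : comp (comp iB1 (comp a1 pA1) + comp iB2 (comp a2 pA2)) (idm PA) =
     comp (idm PB) (comp iB1 (comp a1 pA1) + comp iB2 (comp a2 pA2)).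
    by rewrite (comp1l hT) (comp1r hT).
  apply: (five hT _ _ _ T1 T2 T3 (iso_id hT PA) (iso_id hT PB) ha hb hc).
  - move=> V k ck.
    have h1 : comp c1 (comp pC1 k) = 0.
      move: (congr1 (comp (sigm pA1)) ck); rewrite (comp0r hT).
      by do 2 (nf hT; bps hT bSA; bps hT bC).
    have h2 : comp c2 (comp pC2 k) = 0.
      move: (congr1 (comp (sigm pA2)) ck); rewrite (comp0r hT).
      by do 2 (nf hT; bps hT bSA; bps hT bC).
    have [m1 em1] := dS1 _ _ h1; have [m2 em2] := eS1 _ _ h2.
    exists (comp iB1 m1 + comp iB2 m2).
    rewrite -{1}(bp_sum hT bC k) em1 em2.
    by do 2 (nf hT; bps hT bB).
  - move=> V s cs.
    have bSB := bp_sig hT bB.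
    have h1 : comp (sigm a1) (comp (sigm pA1) s) = 0.
      move: (congr1 (comp (sigm pB1)) cs); rewrite (comp0r hT).
      by do 3 (nf hT; bps hT bSB).
    have h2 : comp (sigm a2) (comp (sigm pA2) s) = 0.
      move: (congr1 (comp (sigm pB2)) cs); rewrite (comp0r hT).
      by do 3 (nf hT; bps hT bSB).
    have [k1 ek1] := dS2 _ _ h1; have [k2 ek2] := eS2 _ _ h2.
    exists (comp iC1 k1 + comp iC2 k2).
    rewrite -{1}(bp_sum hT bSA s) ek1 ek2.
    by do 2 (nf hT; bps hT bC).
  - by do 2 (nf hT; bps hT bB); rewrite (compE2 hT _ dS3) (compE2 hT _ eS3) !(comp0l hT) !(comp0r hT) addr0.
have hW' := hW; rewrite /is_iso in hW'; case: hW' => Wi [Wi1 Wi2].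
apply: (TR1a hT d0 (iso_id hT PA) (iso_id hT PB) (w := Wi)).
- by exists W.
- by rewrite (comp1l hT) (comp1r hT).
- rewrite (comp1r hT) in hb; rewrite hb (comp1r hT) (compA hT Wi) Wi1 (comp1l hT) //.
- rewrite (sigm1 hT) (comp1l hT) in hc; rewrite -hc -(compA hT _ W Wi) Wi2 (comp1r hT) (sigm1 hT) (comp1l hT) //.
Qed.

Lemma bp_zr (T : TriData) (hT : is_triangulated T) (X Z : Ob T) : is_zero_obj Z ->
  is_biproduct (idm X) (0 : Mor Z X) (idm X) (0 : Mor X Z).
Proof.
move=> hZ; split; rewrite ?(comp1l hT) ?(comp0l hT) ?(comp0r hT) ?addr0 //.
by rewrite zero_idm.
Qed.
Lemma bp_zl (T : TriData) (hT : is_triangulated T) (X Z : Ob T) : is_zero_obj Z ->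
  is_biproduct (0 : Mor Z X) (idm X) (0 : Mor X Z) (idm X).
Proof.
move=> hZ; split; rewrite ?(comp1l hT) ?(comp0l hT) ?(comp0r hT) ?add0r //.
by rewrite zero_idm.
Qed.

Lemma split_dist (T : TriData) (hT : is_triangulated T) (X Y S : Ob T) i1 i2 p1 p2 :
  @is_biproduct T X Y S i1 i2 p1 p2 -> dist i1 p2 (0 : Mor Y (Sig X)).
Proof.
move=> bS; have [Z0 hZ] := zero_exists hT.
move: (dsum hT (TR1b hT X hZ) (triv2 hT Y hZ) (bp_zr hT X hZ) bS (bp_zl hT Y hZ)).
by nf hT.
Qed.

Lemma elem_iso (T : TriData) (hT : is_triangulated T) (P : Ob T) (e : Mor P P) :
  comp e e = 0 -> is_iso (idm P + e).
Proof.
move=> ee; exists (idm P - e); split; nf hT; rewrite ?(compBr hT) ?(compBl hT) ?(comp1l hT) ?(comp1r hT) ee;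
  by rewrite subr0 ?addrK ?subrK // -addrA subrr addr0.
Qed.

Lemma elem_inv (T : TriData) (hT : is_triangulated T) (P : Ob T) (e : Mor P P) :
  comp e e = 0 -> comp (idm P + e) (idm P - e) = idm P /\ comp (idm P - e) (idm P + e) = idm P.
Proof.
move=> ee; split; nf hT; rewrite ?(compBr hT) ?(compBl hT) ?(comp1l hT) ?(comp1r hT) ee;
  by rewrite subr0 ?addrK ?subrK // -addrA subrr addr0.
Qed.

Lemma fin (V : zmodType) (a b c a' b' c' : V) :
  b + (a' + c') = a + c + b' -> a - b + c = a' - b' + c'.
Proof.
move=> E; apply: (addIr (b + b')).
have -> : a - b + c + (b + b') = a + c + b'.
  by rewrite addrAC addrA subrK addrAC.
rewrite -E.
have -> : a' - b' + c' + (b + b') = a' + c' + b + (b' - b').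
  by rewrite subrr addr0 (addrC b) addrAC addrA subrK addrAC.
by rewrite subrr addr0 addrC (addrC a').
Qed.

Lemma acrev (V : zmodType) (x y z t : V) : x + y + (z + t) = t + z + (y + x).
Proof. by rewrite addrC (addrC z) (addrC x). Qed.

Theorem mainTheorem15 (T : TriData) (hT : is_triangulated T)
  (hsplit : idempotents_split T)
  (A B C A' B' C' : Ob T)
  (a : Mor A B) (b : Mor B C) (c : Mor C (Sig A))
  (a' : Mor A' B') (b' : Mor B' C') (c' : Mor C' (Sig A'))
  (ht : dist a b c) (ht' : dist a' b' c')
  (hiso : ImY_iso c c') :
  K0sp_eq A B C A' B' C'.
Proof.
case: hiso => phi [phiIm phiD phiI phiS phiN].
have Ic : ImY c c by exists (idm C); rewrite comp1r.
have Ic' : ImY c' c' by exists (idm C'); rewrite comp1r.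
have I0 : forall X, ImY c (0 : Mor X (Sig A)) by move=> X; exists 0; rewrite comp0r.
have phi0 : forall X, phi X 0 = 0.
  move=> X; have := phiD X 0 0 (I0 X) (I0 X); rewrite addr0 => e.
  by apply: (addrI (phi X 0)); rewrite addr0 -e.
have [w ew] := phiIm C c Ic.
have [f' [w' ew'] ef'] := phiS C' c' Ic'.
have e1 : comp c' (comp w w') = c'.
  by rewrite (compA hT) -ew -phiN // -ew' ef'.
have e2 : comp c (comp w' w) = c.
  apply: (phiI _ _ _ _ Ic); first by exists (comp w' w).
  rewrite (compA hT) phiN; last by exists w'.
  by rewrite -ew' ef' ew.
have [u eu] : exists u : Mor (Sig A) (Sig A'), comp c' w = comp u c.
  apply: (exact_left hT (rot hT ht)).
  by rewrite -ew -phiN // (consec hT (rot hT ht)) phi0.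
have [u' eu'] : exists u' : Mor (Sig A') (Sig A), comp c w' = comp u' c'.
  apply: (exact_left hT (rot hT ht')).
  apply: (phiI _ _ _ _ (I0 _)); first by exists (comp w' b'); rewrite (compA hT).
  rewrite phi0 phiN; last by exists w'.
  by rewrite -ew' ef' (consec hT (rot hT ht')).
have [PA [iA [iA' [pA [pA' bA]]]]] := biprod_exists hT A A'.
have [PC [jC [jC' [qC [qC' bC]]]]] := biprod_exists hT C C'.
have [S' [s1' [s2' [t1' [t2' bS']]]]] := biprod_exists hT A' C'.
have [S [s1 [s2 [t1 [t2 bS]]]]] := biprod_exists hT A C.
have [PB1 [k1 [k2 [l1 [l2 bB1]]]]] := biprod_exists hT B S'.
have [PB2 [m1 [m2 [n1 [n2 bB2]]]]] := biprod_exists hT S B'.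
have [x1 [y1 d1]] : exists x y, @dist T PA PB1 PC x y (comp (sigm iA) (comp c qC)).
  move: (dsum hT ht (split_dist hT bS') bA bB1 bC).
  rewrite (comp0l hT) (comp0r hT) addr0 => H; eexists; eexists; exact: H.
have [x2 [y2 d2]] : exists x y, @dist T PA PB2 PC x y (comp (sigm iA') (comp c' qC')).
  move: (dsum hT (split_dist hT bS) ht' bA bB2 bC).
  rewrite (comp0l hT) (comp0r hT) add0r => H; eexists; eexists; exact: H.
have bSA := bp_sig hT bA.
have eut : forall V (X : Mor V C), comp u (comp c X) = comp c' (comp w X).
  by move=> V X; rewrite !(compA hT) eu.
have eut' : forall V (X : Mor V C'), comp u' (comp c' X) = comp c (comp w' X).
  by move=> V X; rewrite !(compA hT) eu'.
have e1t : forall V (X : Mor V C'), comp c' (comp w (comp w' X)) = comp c' X.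
  by move=> V X; rewrite (compA hT w) (compA hT) e1.
have e2t : forall V (X : Mor V C), comp c (comp w' (comp w X)) = comp c X.
  by move=> V X; rewrite (compA hT w') (compA hT) e2.
pose P1 := idm PC + comp jC (comp w' qC').
pose P1i := idm PC - comp jC (comp w' qC').
pose P2 := idm PC + comp jC' (comp w qC).
pose Q1 := idm (Sig PA) + comp (sigm iA') (comp u (sigm pA)).
pose Q2 := idm (Sig PA) + comp (sigm iA) (comp u' (sigm pA')).
pose Q2i := idm (Sig PA) - comp (sigm iA) (comp u' (sigm pA')).
have N : comp Q1 (comp (comp (sigm iA) (comp c qC)) P1) =
         comp Q2 (comp (comp (sigm iA') (comp c' qC')) P2).
  rewrite /Q1 /Q2 /P1 /P2.
  do 3 (nf hT; bps hT bC; bps hT bSA).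
  by rewrite ?eut ?eut' ?e1t ?e2t acrev.
have hP : comp (comp (sigm iA') (comp c' qC')) (comp P2 P1i) =
          comp (comp Q2i Q1) (comp (sigm iA) (comp c qC)).
  have [iP1 _] : comp P1 P1i = idm PC /\ comp P1i P1 = idm PC.
    by apply: elem_inv; do 2 (nf hT; bps hT bC).
  have [_ iQ2] : comp Q2 Q2i = idm _ /\ comp Q2i Q2 = idm _.
    by apply: elem_inv; do 2 (nf hT; bps hT bSA).
  transitivity (comp Q2i (comp Q2 (comp (comp (comp (sigm iA') (comp c' qC')) P2) P1i))).
    by rewrite (compA hT Q2i) iQ2 (comp1l hT) (compA hT).
  rewrite (compA hT Q2) -N -!(compA hT) iP1 (comp1r hT).
  by rewrite !(compA hT).
have [iP1 iP1'] : comp P1 P1i = idm PC /\ comp P1i P1 = idm PC.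
  by apply: elem_inv; do 2 (nf hT; bps hT bC).
have [iQ2 iQ2'] : comp Q2 Q2i = idm _ /\ comp Q2i Q2 = idm _.
  by apply: elem_inv; do 2 (nf hT; bps hT bSA).
have isoP : is_iso (comp P2 P1i).
  apply: (iso_comp hT); first by exists P1.
  by apply: (elem_iso hT); do 2 (nf hT; bps hT bC).
have isoQ : is_iso (comp Q2i Q1).
  apply: (iso_comp hT); last by exists Q2.
  by apply: (elem_iso hT); do 2 (nf hT; bps hT bSA).
have r1 := rot hT (rot hT d1); have r2 := rot hT (rot hT d2).
have [z [ez1 ez2]] := TR3' hT r1 r2 hP.
have isoz := dist_five hT r1 r2 isoP isoQ hP ez1 ez2.
have isoB := sig_reflect hT isoz.
move=> G F [Fiso Fbp].
have E := Fiso _ _ isoB.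
have bp : forall X Y P i1 i2 p1 p2, @is_biproduct T X Y P i1 i2 p1 p2 -> biprod_of X Y P.
  by move=> X Y P i1 i2 p1 p2 h; exists i1, i2, p1, p2.
rewrite (Fbp _ _ _ (bp _ _ _ _ _ _ _ bB1)) (Fbp _ _ _ (bp _ _ _ _ _ _ _ bB2)) in E.
rewrite (Fbp _ _ _ (bp _ _ _ _ _ _ _ bS')) (Fbp _ _ _ (bp _ _ _ _ _ _ _ bS)) in E.
exact: fin E.
Qed.
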